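(* The set $\mathbb Q^+$ of positive rational numbers, canonically arranged as below, has size sequence $$\sigma(\mathbb Q^+)=(\alpha+1)\cdot\sigma(\mathbb I),\quad\text{i.e. } \sigma_n(\mathbb Q^+)=(n+1)\Phi(n),$$ where $\Phi(n)=\sum_{i=1}^n\varphi(i)$ with $\varphi$ Euler's totient function; moreover $\sigma(\mathbb Q^+)\approx_\mathcal F\alpha^3$, and more precisely $$\tfrac{3}{10}(\alpha^3+\alpha^2)<_\mathcal F\sigma(\mathbb Q^+)<_\mathcal F\frac{\alpha^3-\alpha}{2}.$$
   Context: $\mathbb N=\{1,2,\dots\}$. Every positive rational is uniquely written as a mixed fraction $p+k/m$ with $p\in\mathbb N_0$, $k,m\in\mathbb N$, $\gcd(k,m)=1$, $k\le m$, and is represented by the triple $(p,k,m)$; thus $\mathbb Q^+=\mathbb N_0\times\mathbb I$ where $\mathbb I=(0,1]\cap\mathbb Q$ is represented by the pairs $(k,m)$. Arrangements: $\mathbb N_0$ has first component $\{0,1\}$ and $n$-th component $\{n\}$ for $n\ge2$; $\mathbb I$ has $n$-th component $\{(k,n):\gcd(k,n)=1,k\le n\}$; a product $A\times B$ has $n$-th component $\bigcup\{A_i\times B_j:\max\{i,j\}=n\}$. Hence the triple $(p,k,m)$ lies in component $\max\{\ell(p),m\}$ where $\ell(0)=1$ and $\ell(p)=p$ for $p\ge1$. The size sequence is $\sigma(A)=(\sigma_n(A))_n$, $\sigma_n(A)=|A_1|+\dots+|A_n|$. $\alpha=(n)_n$; operations on sequences are componentwise; constants are identified with constant sequences. $(a_n)<_\mathcal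 F(b_n)$ iff $a_n<b_n$ for all sufficiently large $n$; $(a_n)\approx_\mathcal F(b_n)$ iff some $k\in\mathbb N$ has $ka_n\ge b_n$ for all large $n$ and some $k$ has $kb_n\ge a_n$ for all large $n$. *)

(* Defs.v *)
From mathcomp Require Import all_boot all_order all_algebra.
Set Implicit Arguments. Unset Strict Implicit. Unset Printing Implicit Defensive.
Import Order.TTheory GRing.Theory Num.Theory.

(* An arrangement of a set A is a sequence of finite components A_1, A_2, ...
   (index 0 unused); represented by a function from nat to finite lists. *)
Definition arrangement (T : Type) := nat -> seq T.

Definition N0arr : arrangement nat :=
  fun n => if n == 0 then [::] else if n == 1 then [:: 0; 1] else [:: n].

(* I = (0,1] ∩ Q represented by pairs (k,m), gcd(k,m)=1, 1 <= k <= m;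
   n-th component = {(k,n) : gcd(k,n)=1, k <= n}. *)
Definition Iarr : arrangement (nat * nat) :=
  fun n => [seq (k, n) | k <- iota 1 n & coprime k n].

Definition prod_arr (S T : Type) (A : arrangement S) (B : arrangement T)
  : arrangement (S * T) :=
  fun n => flatten [seq [seq (a, b) | a <- A ij.1, b <- B ij.2]
                   | ij <- [seq (i, j) | i <- iota 1 n, j <- iota 1 n]
                   & maxn ij.1 ij.2 == n].

(* Q+ = N_0 × I, the triple (p,k,m) being ((p,(k,m))), i.e. p + k/m. *)
Definition Qplus_arr : arrangement (nat * (nat * nat)) := prod_arr N0arr Iarr.

Definition sigma (T : Type) (A : arrangement T) (n : nat) : nat :=
  \sum_(1 <= i < n.+1) size (A i).

Definition Phi (n : nat) : nat := \sum_(1 <= i < n.+1) totient i.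

Local Open Scope ring_scope.

Definition ltF (a b : nat -> rat) : Prop :=
  exists N : nat, forall n : nat, (N <= n)%N -> a n < b n.

Definition approxF (a b : nat -> rat) : Prop :=
  (exists k : nat, (0 < k)%N /\ exists N : nat, forall n : nat, (N <= n)%N ->
      b n <= k%:R * a n) /\
  (exists k : nat, (0 < k)%N /\ exists N : nat, forall n : nat, (N <= n)%N ->
      a n <= k%:R * b n).

(* Main.v *)
From Stdlib Require Import ZArith Lia.
Require Import Defs.
From mathcomp Require Import all_boot all_order all_algebra.
From mathcomp Require Import zify.
Import Order.TTheory GRing.Theory Num.Theory.

Lemma size_prod_arr S T (A : arrangement S) (B : arrangement T) n :
  size (prod_arr A B n) = \sum_(i <- iota 1 n) \sum_(j <- iota 1 n) (maxn i j == n) * (size (A i) * size (B j)).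
Proof.
rewrite /prod_arr size_flatten /shape -map_comp sumnE big_map big_filter.
rewrite big_mkcond big_allpairs; apply: eq_bigr => i _; apply: eq_bigr => j _ /=.
by case: eqP => _; rewrite ?size_allpairs ?mul1n ?mul0n.
Qed.

Lemma sum_eq1 (s : seq nat) x : uniq s -> x \in s -> \sum_(k <- s) (x == k) = 1.
Proof.
move=> us xs. rewrite (bigD1_seq x) //= eqxx big1 // => k; rewrite eq_sym => /negbTE ->//.
Qed.

Lemma widen_iota k n F : k <= n -> (forall i, k < i -> F i = 0) ->
  \sum_(i <- iota 1 k) F i = \sum_(i <- iota 1 n) F i.
Proof.
move=> kn H; rewrite -(subnKC kn) iotaD big_cat /= [X in _ = _ + X]big1_seq ?addn0 // => i /andP[_].
rewrite mem_iota => /andP[h _]; apply H; lia.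
Qed.

Lemma sigma_prod S T (A : arrangement S) (B : arrangement T) n :
  sigma (prod_arr A B) n = sigma A n * sigma B n.
Proof.
rewrite /sigma /index_iota !subSS !subn0 big_distrl /=.
under eq_bigr => k _ do rewrite size_prod_arr.
transitivity (\sum_(k <- iota 1 n) \sum_(i <- iota 1 n) \sum_(j <- iota 1 n) (maxn i j == k) * (size (A i) * size (B j))).
  apply: eq_big_seq => k; rewrite mem_iota => /andP[_ kn].
  rewrite (@widen_iota k n); last 2 first.
  - lia.
  - move=> i ki; apply: big1 => j _; have -> : (maxn i j == k) = false by lia. done.
  apply: eq_bigr => i _; apply: widen_iota; first lia.
  move=> j kj; have -> : (maxn i j == k) = false by lia. done.
rewrite exchange_big; apply: eq_big_seq => i Hi.
rewrite exchange_big big_distrr /=; apply: eq_big_seq => j Hj.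
rewrite -big_distrl /= sum_eq1 ?mul1n ?iota_uniq //.
move: Hi Hj; rewrite !mem_iota; lia.
Qed.

Lemma totient_sum b : totient b = \sum_(1 <= a < b.+1) coprime a b.
Proof.
rewrite totient_count_coprime; case: b => [|m]; first by rewrite !big_geq.
rewrite [LHS]big_ltn // [RHS]big_nat_recr //=.
rewrite /coprime gcdn0 gcdnn addnC; congr (_ + _).
by apply: eq_bigr => i _; rewrite gcdnC.
Qed.

Lemma size_Iarr b : size (Iarr b) = totient b.
Proof.
rewrite /Iarr size_map size_filter totient_sum -sum1_count big_mkcond /=.
by rewrite /index_iota subSS subn0; apply: eq_bigr => i _; case: coprime.
Qed.

Lemma sigma_Iarr n : sigma Iarr n = Phi n.
Proof. by apply: eq_bigr => i _; rewrite size_Iarr. Qed.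

Lemma sigmaS T (A : arrangement T) n : sigma A n.+1 = sigma A n + size (A n.+1).
Proof. by rewrite /sigma big_nat_recr. Qed.

Lemma sigma_N0 n : sigma N0arr n = if n == 0 then 0 else n.+1.
Proof.
elim: n => [|n IH]; first by rewrite /sigma big_geq.
rewrite sigmaS IH /N0arr.
by case: n {IH} => [|n] //=; rewrite addn1.
Qed.

Definition Sfree (S : seq nat) a b := all (fun p => ~~ ((p %| a) && (p %| b))) S.
Definition FF S n := \sum_(1 <= b < n.+1) \sum_(1 <= a < b.+1) (Sfree S a b : nat).

Lemma mult_sum q n (Y : nat -> nat) : 0 < q ->
  \sum_(1 <= b < n.+1) (if q %| b then Y b else 0) = \sum_(1 <= b < (n %/ q).+1) Y (q * b).
Proof.
move=> q0; elim: n => [|n IH]; first by rewrite div0n !big_geq.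
rewrite big_nat_recr //= IH divnS //.
case: (boolP (q %| n.+1)) => Hd; last by rewrite addn0 add0n.
rewrite add1n [RHS]big_nat_recr //=; congr (_ + _); congr Y.
by move: (divnS n q0); rewrite Hd add1n => <-; rewrite mulnC divnK.
Qed.

Lemma Sfree_mul S q a b : (forall p, p \in S -> coprime p q) ->
  Sfree S (q * a) (q * b) = Sfree S a b.
Proof.
move=> H; apply: eq_in_all => p pS /=; by rewrite !Gauss_dvdr // H.
Qed.

Lemma F_mult S q n : 0 < q -> (forall p, p \in S -> coprime p q) ->
  \sum_(1 <= b < n.+1) \sum_(1 <= a < b.+1) (((q %| a) && (q %| b)) && Sfree S a b : nat) = FF S (n %/ q).
Proof.
move=> q0 H.
transitivity (\sum_(1 <= b < n.+1) (if q %| b then \sum_(1 <= a < b.+1) (if q %| a then (Sfree S a b : nat) else 0) else 0)).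
  apply: eq_bigr => b _; case: (q %| b); last by rewrite big1 // => a _; rewrite andbF.
  by apply: eq_bigr => a _; rewrite andbT; case: (q %| a).
rewrite (@mult_sum q n (fun b => \sum_(1 <= a < b.+1) (if q %| a then (Sfree S a b : nat) else 0))) //.
apply: eq_bigr => b _.
rewrite (@mult_sum q (q * b) (fun a => (Sfree S a (q * b) : nat))) // mulKn //.
by apply: eq_bigr => a _; rewrite Sfree_mul.
Qed.

Lemma F_split S q n : 0 < q -> (forall p, p \in S -> coprime p q) ->
  FF S n = FF (q :: S) n + FF S (n %/ q).
Proof.
move=> q0 H; rewrite -F_mult // /FF -big_split; apply: eq_bigr => b _.
rewrite -big_split; apply: eq_bigr => a _ /=.
by case: (q %| a); case: (q %| b); case: (Sfree S a b).
Qed.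

Lemma F_nil n : (2 * FF [::] n = n * n.+1)%N.
Proof.
elim: n => [|n IH]; first by rewrite /FF big_geq.
rewrite /FF big_nat_recr //= -/(FF [::] n) mulnDr IH.
rewrite (_ : \sum_(1 <= a < n.+2) 1 = n.+1); last by rewrite sum_nat_const_nat subSS subn0 muln1.
lia.
Qed.

Local Open Scope Z_scope.
Lemma stepZ (D C E G q x m fn fm fn' : Z) : 0 < D -> 0 <= C -> 0 <= E -> 0 <= G -> 1 <= q -> 0 <= m -> q * m <= x < q * (m+1) -> fn = fn' + fm ->
 C * x * x - E * x - G <= 2 * D * fn <= C * x * x + E * x + G ->
 C * m * m - E * m - G <= 2 * D * fm <= C * m * m + E * m + G ->
 (q * q-1) * C * x * x - (E * (q * q+q) + 2 * C * q) * x - 2 * G * q * q <= 2 * (q * q * D) * fn' <= (q * q-1) * C * x * x + (E * (q * q+q) + 2 * C * q) * x + 2 * G * q * q.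
Proof.
intros HD HC HE HG Hq Hm [H1 H2] Hf [L1 U1] [L2 U2].
assert (A1 : (q * m) * (q * m) <= x * x) by nia.
assert (A2 : x * x - 2 * q * x <= (q * m) * (q * m)).
{ destruct (Z_le_gt_dec q x); nia. }
assert (B1 : C * ((q * m) * (q * m)) <= C * (x * x)) by (apply Z.mul_le_mono_nonneg_l; lia).
assert (B2 : C * (x * x - 2 * q * x) <= C * ((q * m) * (q * m))) by (apply Z.mul_le_mono_nonneg_l; lia).
assert (B3 : E * q * (q * m) <= E * q * x) by (apply Z.mul_le_mono_nonneg_l; nia).
assert (B4 : 0 <= C * q * x) by nia.
subst fn.
split; nia.
Qed.
Local Close Scope Z_scope.

Local Open Scope Z_scope.
Lemma pos_step z D C E G : 0 < D -> 0 <= C -> 0 <= E -> 0 <= G -> 1 <= z ->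
  (0 < z * z * D) /\ (0 <= (z * z - 1) * C) /\ (0 <= E * (z * z + z) + 2 * C * z) /\ (0 <= 2 * G * z * z).
Proof.
intros. assert (1 <= z * z) by nia. repeat split.
- apply Z.mul_pos_pos; lia.
- apply Z.mul_nonneg_nonneg; lia.
- assert (0 <= E * (z * z + z)) by (apply Z.mul_nonneg_nonneg; lia).
  assert (0 <= C * z) by (apply Z.mul_nonneg_nonneg; lia). lia.
- assert (0 <= G * (z * z)) by (apply Z.mul_nonneg_nonneg; lia). lia.
Qed.

Fixpoint cst (S : seq nat) : Z * Z * Z * Z :=
 match S with
 | [::] => (1, 1, 1, 0)
 | q :: S' => let: (D, C, E, G) := cst S' in let z := Z.of_nat q in
   (z * z * D, (z * z-1) * C, E * (z * z+z)+2 * C * z, 2 * G * z * z)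
 end.

Definition InvZ (k : Z * Z * Z * Z) (f : nat -> nat) : Prop :=
 let: (D, C, E, G) := k in
 ((0 < D) /\ (0 <= C) /\ (0 <= E) /\ (0 <= G)) /\
 forall n, (C * Z.of_nat n * Z.of_nat n - E * Z.of_nat n - G <= 2 * D * Z.of_nat (f n)
      <= C * Z.of_nat n * Z.of_nat n + E * Z.of_nat n + G).

Local Close Scope Z_scope.

Lemma Inv_all S : all prime S -> uniq S -> InvZ (cst S) (FF S).
Proof.
elim: S => [|q S IH].
  move=> _ _; split; first lia.
  move=> n; have := F_nil n; lia.
move=> /andP[pq pS] /andP[qS uS].
have {IH} := IH pS uS; cbn [cst].
case: (cst S) => [[[D C] E] G]; rewrite /InvZ => -[[HD [HC [HE HG]]] Hb].
have q1 : (0 < q)%N by apply: prime_gt0.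
have Hcop : forall p, p \in S -> coprime p q.
  move=> p ps; have pp : prime p by move/allP: pS => /(_ p ps).
  rewrite prime_coprime // dvdn_prime2 //; apply/eqP => epq; move: qS; by rewrite -epq ps.
have Zq : Z.le 1 (Z.of_nat q) by lia.
split; first exact: pos_step.
move=> n.
have Hs := F_split S q n q1 Hcop.
have Hd := divn_eq n q; have Hm := ltn_pmod n q1.
apply: (@stepZ D C E G (Z.of_nat q) (Z.of_nat n) (Z.of_nat (n %/ q)) (Z.of_nat (FF S n)) (Z.of_nat (FF S (n %/ q)))); try lia.
- exact: Nat2Z.is_nonneg.
- exact: Hb.
- exact: Hb.
Qed.

Lemma Sfree_false S r a b : r \in S -> r %| a -> r %| b -> Sfree S a b = false.
Proof. by move=> rS ra rb; apply/negbTE/negP => /allP /(_ r rS); rewrite ra rb. Qed.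

Definition PP := 160.
Definition SP := [seq p <- iota 2 PP.-1 | prime p].

Lemma pw a b n : 0 < a -> a <= b -> b <= n ->
  Sfree SP a b <= coprime a b + \sum_(PP.+1 <= q < n.+1) ((q %| a) && (q %| b)).
Proof.
move=> a0 ab bn.
case: (boolP (coprime a b)) => cab.
  by rewrite (leq_trans (leq_b1 _)) // leq_addr.
rewrite add0n.
have g0 : 0 < gcdn a b by rewrite gcdn_gt0 a0.
have g1 : 1 < gcdn a b by move: cab; rewrite /coprime; lia.
set r := pdiv (gcdn a b).
have rp : prime r := pdiv_prime g1.
have ra : r %| a := dvdn_trans (pdiv_dvd _) (dvdn_gcdl a b).
have rb : r %| b := dvdn_trans (pdiv_dvd _) (dvdn_gcdr a b).
have rg : r <= gcdn a b := pdiv_leq g0.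
have ga : gcdn a b <= a := dvdn_leq a0 (dvdn_gcdl a b).
case: (leqP r PP) => hr.
  have rS : r \in SP by rewrite mem_filter rp mem_iota (prime_gt1 rp) add2n ltnS prednK.
  by rewrite (Sfree_false _ _ _ _ rS ra rb).
have rI : r \in index_iota PP.+1 n.+1 by rewrite mem_index_iota; apply/andP; split; [exact: hr | lia].
have uI : uniq (index_iota PP.+1 n.+1) by rewrite /index_iota iota_uniq.
rewrite (bigD1_seq r rI uI) ra rb.
by rewrite (leq_trans (leq_b1 _)) // leq_addr.
Qed.

Lemma Phi_lower n : FF SP n <= Phi n + \sum_(PP.+1 <= q < n.+1) FF [::] (n %/ q).
Proof.
have E1 : \sum_(PP.+1 <= q < n.+1) FF [::] (n %/ q) =
   \sum_(1 <= b < n.+1) \sum_(1 <= a < b.+1) \sum_(PP.+1 <= q < n.+1) ((q %| a) && (q %| b) : nat).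
  transitivity (\sum_(PP.+1 <= q < n.+1) \sum_(1 <= b < n.+1) \sum_(1 <= a < b.+1)
       (((q %| a) && (q %| b)) && Sfree [::] a b : nat)).
    apply: eq_big_nat => q /andP[hq _]; rewrite F_mult //.
    by apply: leq_ltn_trans (leq0n PP) hq.
  rewrite exchange_big_nat; apply: eq_big_nat => b _.
  rewrite exchange_big_nat; apply: eq_big_nat => a _.
  by apply: eq_big_nat => q _; rewrite andbT.
rewrite E1 /Phi /FF.
under [X in _ <= X + _]eq_bigr => b _ do rewrite totient_sum.
rewrite -big_split big_nat_cond [X in _ <= X]big_nat_cond.
apply: leq_sum => b /andP[/andP[b1 bn] _].
rewrite -big_split big_nat_cond [X in _ <= X]big_nat_cond.
apply: leq_sum => a /andP[/andP[a1 ab] _].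
apply: pw => //; rewrite -ltnS //.
Qed.

Lemma tail2_aux P n d : 0 < P ->
  P * (P + d) * \sum_(P.+1 <= q < (P + d).+1) (n %/ q) ^ 2 <= n ^ 2 * d.
Proof.
move=> P0; elim: d => [|d IH]; first by rewrite addn0 big_geq // muln0.
rewrite addnS big_nat_recr /=; last by rewrite ltnS leq_addr.
set N := P + d in IH *; set S := \sum_(_ <= _ < _) _ in IH *.
set m := n %/ N.+1.
have hm : m * N.+1 <= n := leq_trunc_div n N.+1.
have hN : P <= N by rewrite leq_addr.
have h2 : N * N.+1 * m ^ 2 <= n ^ 2 by nia.
have key : N * (P * N.+1 * (S + m ^ 2)) <= N * (n ^ 2 * d.+1) by nia.
rewrite leq_pmul2l in key => //; lia.
Qed.

Lemma tail2 P n : 0 < P -> P * \sum_(P.+1 <= q < n.+1) (n %/ q) ^ 2 <= n ^ 2.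
Proof.
move=> P0; case: (leqP n P) => hn.
  by rewrite big_geq ?muln0.
have := tail2_aux P n (n - P) P0; rewrite subnKC ?(ltnW hn) // => h.
have n0 : 0 < n by apply: leq_ltn_trans hn.
rewrite -(leq_pmul2l n0); nia.
Qed.

Lemma tail1 P K n : K * \sum_(P.+1 <= q < n.+1) (n %/ q) <=
   \sum_(P.+1 <= q < n.+1) (n %/ q) ^ 2 + K * K * n.
Proof.
rewrite big_distrr /=.
apply: (@leq_trans (\sum_(P.+1 <= q < n.+1) ((n %/ q) ^ 2 + K * K))).
  by apply: leq_sum => q _; nia.
rewrite big_split /= leq_add2l sum_nat_const_nat; nia.
Qed.

Lemma F_nil2 m : 2 * FF [::] m = m ^ 2 + m.
Proof. rewrite F_nil; nia. Qed.

Lemma tailT P K n : 0 < P ->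
  K * P * (2 * \sum_(P.+1 <= q < n.+1) FF [::] (n %/ q)) <= (K + 1) * n ^ 2 + K * K * P * n.
Proof.
move=> P0; rewrite big_distrr /=.
under eq_bigr => q _ do rewrite F_nil2.
rewrite big_split /=.
have h2 := tail2 P n P0; have h1 := tail1 P K n.
nia.
Qed.



Local Open Scope Z_scope.
Definition KK : Z := 10.
Definition Abound : Z := let: (D, C, E, G) := cst SP in
  10 * (KK * 160 * E + D * KK * KK * 160) + 10 * KK * 160 * G + 1.
Local Close Scope Z_scope.

Lemma SP_prime : all prime SP.
Proof. exact: filter_all. Qed.
Lemma SP_uniq : uniq SP.
Proof. exact/filter_uniq/iota_uniq. Qed.

Lemma Phi_lower_eventually : exists N, forall n, N <= n -> 6 * n ^ 2 < 20 * Phi n.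
Proof.
have Hc : cst SP = ltac:(let v := eval vm_compute in (cst SP) in exact v) by vm_compute.
have HA : Abound = ltac:(let v := eval vm_compute in Abound in exact v) by vm_compute.
have HI := Inv_all SP SP_prime SP_uniq; rewrite Hc /InvZ in HI; case: HI => _ Hb.
exists (Z.to_nat Abound); rewrite HA => n hn.
have b := Hb n; have l := Phi_lower n; have t := tailT PP 10 n isT.
rewrite /PP in l t.
set x := Z.of_nat n in b.
have hx : Z.le (Z.of_nat (Z.to_nat Abound)) x by lia.
rewrite HA in hx.
have xx := Z.mul_le_mono_nonneg_r _ _ x (Zle_0_nat n) hx.
lia.
Qed.


Lemma totient_le b : 2 <= b -> totient b <= b - 1.
Proof.
move=> b2; rewrite totient_sum big_nat_recr //=; last by lia.
rewrite /coprime gcdnn (_ : (b == 1) = false); last by lia.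
rewrite addn0; apply: (@leq_trans (\sum_(1 <= a < b) 1)).
  by apply: leq_sum => a _; apply: leq_b1.
by rewrite sum_nat_const_nat muln1.
Qed.

Lemma Phi6 : Phi 6 = 12.
Proof. by rewrite /Phi unlock. Qed.

Lemma Phi_up n : 6 <= n -> 2 * Phi n + 4 <= n * (n - 1).
Proof.
elim: n => // n IH hn.
case: (eqVneq n 5) => [-> | n5]; first by rewrite Phi6.
have hn' : 6 <= n by lia.
have h1 := IH hn'.
have h2 := totient_le n.+1 (ltac:(lia) : 2 <= n.+1).
rewrite /Phi big_nat_recr //= -/(Phi n).
nia.
Qed.


Lemma sigma_Q n : sigma Qplus_arr n = ((n + 1) * sigma Iarr n)%N.
Proof.
rewrite /Qplus_arr sigma_prod sigma_N0; case: n => [|n] /=; first by rewrite /sigma big_geq.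
by rewrite addn1.
Qed.

Local Open Scope ring_scope.

Theorem theorem11 :
  (forall n : nat, sigma Qplus_arr n = ((n + 1) * sigma Iarr n)%N) /\
  (forall n : nat, sigma Qplus_arr n = ((n + 1) * Phi n)%N) /\
  approxF (fun n => (sigma Qplus_arr n)%:R) (fun n => (n ^ 3)%:R) /\
  ltF (fun n => (3%:R / 10%:R) * ((n ^ 3)%:R + (n ^ 2)%:R))
      (fun n => (sigma Qplus_arr n)%:R) /\
  ltF (fun n => (sigma Qplus_arr n)%:R)
      (fun n => ((n ^ 3)%:R - n%:R) / 2%:R).
Proof.
have SQ : forall n, sigma Qplus_arr n = ((n + 1) * Phi n)%N.
  by move=> n; rewrite sigma_Q sigma_Iarr.
have [N HN] := Phi_lower_eventually.
split; first exact: sigma_Q.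
split; first exact: SQ.
split; last split.
- split.
  + exists 4%N; split => //; exists N => n hn.
    rewrite -natrM ler_nat SQ; have := HN n hn; nia.
  + exists 2%N; split => //; exists 6%N => n hn.
    rewrite -natrM ler_nat SQ; have := Phi_up n hn; nia.
- exists N => n hn.
  rewrite -natrD mulrC mulrA -natrM ltr_pdivrMr ?ltr0n // -natrM ltr_nat SQ.
  have := HN n hn; nia.
- exists 6%N => n hn.
  rewrite -natrB; last by nia.
  rewrite ltr_pdivlMr ?ltr0n // -natrM ltr_nat SQ.
  have := Phi_up n hn; nia.
Qed.
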